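(* Let $k\ge3$ be an integer and let $n$ be such that $x_k(n-1)\ge \frac{26}{\sqrt{\alpha_k}}$. Then $$1-\Theta_M(n)\ge \frac{\sqrt{\alpha_k}\,\pi^4}{36\,x_k(n+1)^3}.$$
   Context: Let $x_k(n):=\frac{\pi\sqrt{24n-(2k+2)}}{6}$, $\alpha_k:=\frac{5k+2}{2k+1}$, $M_k(n):=\frac{\pi^3\alpha_k}{18x_k(n)^2}I_2(\sqrt{\alpha_k}x_k(n))$ with $I_2$ the modified Bessel function of the first kind of order $2$, and $\Theta_M(n):=\frac{M_k(n-1)M_k(n+1)}{M_k(n)^2}$. *)

(* Defs.v *)
From Stdlib Require Import Reals.
From Coquelicot Require Import Coquelicot.
Open Scope R_scope.

Definition bessel_I2 (x : R) : R :=
  Series (fun m : nat => (x / 2) ^ (2 * m + 2) / (INR (Factorial.fact m) * INR (Factorial.fact (m + 2)))).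

(* x_k(n) = pi sqrt(24 n - (2k+2)) / 6, with n a real argument
   (we evaluate it at n-1, n, n+1). *)
Definition xk (k : nat) (n : R) : R :=
  PI * sqrt (24 * n - (2 * INR k + 2)) / 6.

Definition alphak (k : nat) : R := (5 * INR k + 2) / (2 * INR k + 1).

Definition Mk (k : nat) (n : R) : R :=
  PI ^ 3 * alphak k / (18 * (xk k n) ^ 2) * bessel_I2 (sqrt (alphak k) * xk k n).

Definition ThetaM (k : nat) (n : R) : R :=
  Mk k (n - 1) * Mk k (n + 1) / (Mk k n) ^ 2.

(* Main.v *)
Require Import Defs.
From Stdlib Require Import Reals Lra Lia Psatz.
From Coquelicot Require Import Coquelicot.
Open Scope R_scope.
Notation fact := Factorial.fact.

Definition ca (n : nat) : R := / (INR (Factorial.fact n) * INR (Factorial.fact (n + 2))).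

Lemma ca_pos n : 0 < ca n.
Proof. unfold ca. apply Rinv_0_lt_compat, Rmult_lt_0_compat; apply INR_fact_lt_0. Qed.

Lemma ca_S n : ca (S n) = ca n / (INR (S n) * INR (n + 3)).
Proof.
  unfold ca.
  replace (S n + 2)%nat with (S (n + 2)) by lia.
  change (fact (S n)) with (S n * fact n)%nat.
  change (fact (S (n+2))) with (S (n+2) * fact (n+2))%nat.
  rewrite !mult_INR. replace (S (n+2)) with (n+3)%nat by lia.
  assert (INR (fact n) <> 0) by apply INR_fact_neq_0.
  assert (INR (fact (n+2)) <> 0) by apply INR_fact_neq_0.
  assert (INR (S n) <> 0) by (apply not_0_INR; lia).
  assert (INR (n+3) <> 0) by (apply not_0_INR; lia).
  field; auto.
Qed.

Lemma ca_radius : CV_radius ca = p_infty.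
Proof.
  apply CV_radius_infinite_DAlembert.
  - intro n. apply Rgt_not_eq, ca_pos.
  - apply is_lim_seq_ext with (fun n => / (INR (S n) * INR (n+3))).
    + intro n. rewrite ca_S. rewrite Rabs_pos_eq.
      * assert (ca n <> 0) by apply Rgt_not_eq, ca_pos.
        assert (INR (S n) <> 0) by (apply not_0_INR; lia).
        assert (INR (n+3) <> 0) by (apply not_0_INR; lia).
        field; auto.
      * left. apply Rmult_lt_0_compat.
        -- apply Rmult_lt_0_compat; [apply ca_pos|]. apply Rinv_0_lt_compat, Rmult_lt_0_compat; apply lt_0_INR; lia.
        -- apply Rinv_0_lt_compat, ca_pos.
    + replace (Finite 0) with (Rbar_inv p_infty) by reflexivity.
      apply is_lim_seq_inv; [|discriminate].
      apply is_lim_seq_le_p_loc with (fun n => INR n).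
      * exists 0%nat. intros n _. rewrite S_INR, plus_INR.
        assert (0 <= INR n) by apply pos_INR. simpl. nra.
      * apply is_lim_seq_INR.
Qed.

Definition G (x : R) := PSeries ca x.
Definition G1 (x : R) := PSeries (PS_derive ca) x.
Definition G2 (x : R) := PSeries (PS_derive (PS_derive ca)) x.

Lemma rad_in a x : CV_radius a = p_infty -> Rbar_lt (Rabs x) (CV_radius a).
Proof. intro H; rewrite H; exact I. Qed.

Lemma rad1 : CV_radius (PS_derive ca) = p_infty.
Proof. rewrite CV_radius_derive; apply ca_radius. Qed.
Lemma rad2 : CV_radius (PS_derive (PS_derive ca)) = p_infty.
Proof. rewrite CV_radius_derive; apply rad1. Qed.

Lemma dG x : is_derive G x (G1 x).
Proof. apply is_derive_PSeries, rad_in, ca_radius. Qed.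
Lemma dG1 x : is_derive G1 x (G2 x).
Proof. apply is_derive_PSeries, rad_in, rad1. Qed.

Lemma pseries_nonneg b x : CV_radius b = p_infty -> (forall n, 0 <= b n) -> 0 <= x ->
  0 <= PSeries b x.
Proof.
  intros Hr Hb Hx.
  assert (E : Series (fun n => 0 * (b n * x ^ n)) = 0).
  { rewrite Series_scal_l; ring. }
  rewrite <- E. unfold PSeries. apply Series_le.
  - intro n. split; [lra|]. rewrite Rmult_0_l. apply Rmult_le_pos; auto. apply pow_le; auto.
  - apply ex_series_ext with (fun k => scal (pow_n x k) (b k)).
    + intro n. rewrite pow_n_pow. unfold scal; simpl. unfold mult; simpl. ring.
    + apply (CV_radius_inside b x), rad_in, Hr.
Qed.

Lemma pseries_pos b x : CV_radius b = p_infty -> (forall n, 0 < b n) -> 0 <= x ->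
  0 < PSeries b x.
Proof.
  intros Hr Hb Hx.
  rewrite PSeries_decr_1 by (apply CV_radius_inside, rad_in, Hr).
  assert (0 <= PSeries (PS_decr_1 b) x).
  { apply pseries_nonneg; auto.
    - rewrite CV_radius_decr_1; auto.
    - intro n; unfold PS_decr_1; left; apply Hb. }
  specialize (Hb 0%nat). nra.
Qed.

Lemma G_pos x : 0 <= x -> 0 < G x.
Proof. intro; apply pseries_pos; auto. apply ca_radius. apply ca_pos. Qed.
Lemma G1_pos x : 0 <= x -> 0 < G1 x.
Proof. intro; apply pseries_pos; auto. apply rad1.
  intro n; unfold PS_derive. apply Rmult_lt_0_compat. apply lt_0_INR; lia. apply ca_pos. Qed.


Lemma ode_aux m : INR (S m) * (INR (S (S m)) * ca (S (S m))) + 3 * (INR (S (S m)) * ca (S (S m))) = ca (S m).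
Proof.
  rewrite (ca_S (S m)).
  assert (ca (S m) <> 0) by apply Rgt_not_eq, ca_pos.
  assert (INR (S m + 3) = INR (S (S m)) + 2) by (rewrite plus_INR, !S_INR; simpl; ring).
  rewrite H0.
  assert (0 < INR (S m)) by (apply lt_0_INR; lia).
  rewrite (S_INR (S m)). field. lra.
Qed.

Lemma ode x : x * G2 x + 3 * G1 x = G x.
Proof.
  unfold G, G1, G2.
  rewrite <- PSeries_incr_1, <- (PSeries_scal 3).
  rewrite <- PSeries_plus.
  2: { apply ex_pseries_incr_1, CV_radius_inside, rad_in, rad2. }
  2: { apply ex_pseries_scal; [unfold mult; simpl; ring|]. apply CV_radius_inside, rad_in, rad1. }
  apply PSeries_ext. intro n. unfold PS_plus, PS_scal, PS_incr_1, PS_derive.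
  destruct n as [|m].
  - unfold plus, scal, zero; simpl; unfold mult; simpl. unfold ca. simpl. lra.
  - exact (ode_aux m).
Qed.

Definition Lf (v : R) := 1 / sqrt v - 5 / (4 * v).
Definition Ff (v : R) := exp (2 * sqrt v + 7/4 * ln v).
Definition Zf (v : R) := (Lf v * G v - G1 v) * Ff v.

Lemma is_derive_eq (f : R -> R) (x d1 d2 : R) : is_derive f x d1 -> d1 = d2 -> is_derive f x d2.
Proof. intros H ->; exact H. Qed.

Lemma dL v : 0 < v -> is_derive Lf v (-1/(2*v*sqrt v) + 5/(4*v*v)).
Proof.
  intro Hv. unfold Lf. assert (0 < sqrt v) by (apply sqrt_lt_R0; lra).
  auto_derive.
  - repeat split; lra.
  - assert (sqrt v * sqrt v = v) by (apply sqrt_sqrt; lra).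
    rewrite H0. simpl. field. lra.
Qed.

Lemma dF v : 0 < v -> is_derive Ff v (Ff v * (1 / sqrt v + 7/(4*v))).
Proof.
  intro Hv. unfold Ff. assert (0 < sqrt v) by (apply sqrt_lt_R0; lra).
  auto_derive.
  - repeat split; lra.
  - field. lra.
Qed.

Lemma dZ v : 0 < v -> is_derive Zf v (-(15/(16*v*v)) * G v * Ff v).
Proof.
  intro Hv. unfold Zf.
  eapply is_derive_eq.
  { apply Derive.is_derive_mult; [|apply dF; auto].
    apply (is_derive_minus (K:=R_AbsRing) (V:=R_NormedModule) (fun t => Lf t * G t) G1); [|apply dG1].
    apply Derive.is_derive_mult; [apply dL; auto| apply dG]. }
  assert (Hs : 0 < sqrt v) by (apply sqrt_lt_R0; lra).
  assert (Hss : sqrt v * sqrt v = v) by (apply sqrt_sqrt; lra).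
  assert (HG2 : G2 v = (G v - 3 * G1 v) / v).
  { rewrite <- (ode v). field. lra. }
  rewrite HG2. unfold Lf. unfold minus, plus, opp; simpl.
  set (s := sqrt v) in *. rewrite <- Hss. field. lra.
Qed.

Lemma Ff_pos v : 0 < Ff v.
Proof. apply exp_pos. Qed.

Lemma W_neg v : 1 <= v -> Lf v * G v - G1 v < 0.
Proof.
  intro Hv.
  assert (Z1 : Zf 1 < 0).
  { unfold Zf, Lf. rewrite sqrt_1.
    pose proof (G_pos 1 ltac:(lra)). pose proof (G1_pos 1 ltac:(lra)).
    pose proof (Ff_pos 1).
    apply Rmult_lt_reg_r with (/ Ff 1). apply Rinv_0_lt_compat; auto.
    rewrite Rmult_0_l, Rmult_assoc, Rinv_r by lra. lra. }
  assert (Zv : Zf v < 0).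
  { destruct (Req_dec v 1) as [->|Hne]; auto.
    destruct (MVT_cor2 Zf (fun c => -(15/(16*c*c)) * G c * Ff c) 1 v) as [c [Hc Hci]].
    - lra.
    - intros c Hc. apply is_derive_Reals, dZ. lra.
    - assert (0 < G c) by (apply G_pos; lra).
      pose proof (Ff_pos c).
      assert (0 < 15/(16*c*c)) by (apply Rdiv_lt_0_compat; nra).
      assert (0 < 15/(16*c*c) * G c * Ff c) by (apply Rmult_lt_0_compat; [apply Rmult_lt_0_compat|]; auto).
      assert (Zf v - Zf 1 < 0).
      { rewrite Hc. replace (- (15 / (16 * c * c)) * G c * Ff c) with (-(15 / (16 * c * c) * G c * Ff c)) by ring.
        apply Ropp_lt_cancel. rewrite Ropp_0, <- Ropp_mult_distr_l, Ropp_involutive.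
        apply Rmult_lt_0_compat; lra. }
      lra. }
  unfold Zf in Zv. pose proof (Ff_pos v).
  destruct (Rlt_or_le (Lf v * G v - G1 v) 0); auto. nra.
Qed.

Definition rr (v : R) := G1 v / G v.
Definition rp (v : R) := (G2 v * G v - G1 v * G1 v) / (G v) ^ 2.

Lemma drr v : 0 <= v -> is_derive rr v (rp v).
Proof.
  intro Hv. unfold rr, rp. apply is_derive_div; [apply dG1|apply dG|].
  apply Rgt_not_eq, G_pos; auto.
Qed.

Lemma rp_bound e : 169 <= e -> rp e <= -3 / (10 * e * sqrt e).
Proof.
  intro He.
  assert (Hs13 : 13 <= sqrt e).
  { replace 13 with (sqrt 169). apply sqrt_le_1_alt; auto.
    replace 169 with (13*13) by ring. apply sqrt_square; lra. }
  assert (Hss : sqrt e * sqrt e = e) by (apply sqrt_sqrt; lra).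
  pose proof (G_pos e ltac:(lra)) as HG.
  pose proof (W_neg e ltac:(lra)) as HW.
  assert (HG2 : G2 e = (G e - 3 * G1 e) / e).
  { rewrite <- (ode e). field. lra. }
  unfold rp. rewrite HG2.
  set (s := sqrt e) in *. set (g := G e) in *. set (g1 := G1 e) in *.
  unfold Lf in HW. fold s in HW. rewrite <- Hss in *.
  set (p := s * (g1 / g)).
  assert (Hp : p > 1 - 5/(4*s)).
  { unfold p. apply Rmult_lt_reg_r with g; auto.
    replace (s * (g1 / g) * g) with (s * g1) by (field; lra).
    apply Rmult_lt_reg_l with (/ s). apply Rinv_0_lt_compat; lra.
    replace (/ s * (s * g1)) with g1 by (field; lra).
    replace (/ s * ((1 - 5 / (4 * s)) * g)) with ((1 / s - 5 / (4 * (s * s))) * g) by (field; lra).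
    lra. }
  set (q := 1 - 5/(4*s)) in *.
  assert (Hq : 0 <= q).
  { unfold q. assert (5/(4*s) <= 1); [|lra].
    apply Rmult_le_reg_r with (4*s); [lra|]. unfold Rdiv. rewrite Rmult_assoc, Rinv_l by lra. lra. }
  assert (E1 : ((g - 3 * g1) / (s * s) * g - g1 * g1) / g ^ 2
             = (s*s*(1 - p*p) - 3*s*p) / (s*s*s*s)).
  { unfold p. field. split; lra. }
  assert (E2 : -3 / (10 * (s * s) * s) = (-3*s/10) / (s*s*s*s)).
  { field. lra. }
  rewrite E1, E2.
  apply Rmult_le_compat_r.
  { left. apply Rinv_0_lt_compat. assert (0 < s*s) by nra. nra. }
  assert (Hq2 : s*s*(1 - q*q) - 3*s*q = -s/2 + 35/16).
  { unfold q. field. lra. }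
  assert (s*s*(1 - p*p) - 3*s*p <= s*s*(1 - q*q) - 3*s*q).
  { assert (q*q <= p*p) by nra. assert (0 < s*s) by nra. nra. }
  lra.
Qed.

Lemma dlnG t : 0 <= t -> is_derive (fun x => ln (G x)) t (rr t).
Proof.
  intro Ht. pose proof (G_pos t Ht).
  eapply is_derive_eq.
  { apply (is_derive_comp (K:=R_AbsRing) (V:=R_NormedModule) ln G t (/ G t) (G1 t)).
    - auto_derive; [lra| field; lra].
    - apply dG. }
  unfold rr, scal; simpl; unfold mult; simpl. field. lra.
Qed.

Lemma dlnGs h t : 0 <= t - h -> is_derive (fun x => ln (G (x - h))) t (rr (t - h)).
Proof.
  intro Ht.
  eapply is_derive_eq.
  { apply (is_derive_comp (K:=R_AbsRing) (V:=R_NormedModule) (fun x => ln (G x)) (fun x => x - h) t (rr (t - h)) 1).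
    - apply dlnG; auto.
    - auto_derive; auto. }
  unfold scal; simpl; unfold mult; simpl. ring.
Qed.

Lemma second_diff u h : 0 < h -> 169 <= u - h ->
  ln (G (u + h)) + ln (G (u - h)) - 2 * ln (G u) <= - (3 * h * h) / (10 * (u + h) * sqrt (u + h)).
Proof.
  intros Hh Hu.
  set (psi := fun x => ln (G x) - ln (G (x - h))).
  destruct (MVT_cor2 psi (fun x => rr x - rr (x - h)) u (u + h)) as [c [Hc Hci]].
  - lra.
  - intros c Hc. apply is_derive_Reals.
    apply (is_derive_minus (K:=R_AbsRing) (V:=R_NormedModule) (fun x => ln (G x)) (fun x => ln (G (x - h)))).
    + apply dlnG; lra.
    + apply dlnGs; lra.
  - destruct (MVT_cor2 rr rp (c - h) c) as [e [He Hei]].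
    + lra.
    + intros y Hy. apply is_derive_Reals, drr. lra.
    + assert (E : ln (G (u + h)) + ln (G (u - h)) - 2 * ln (G u) = rp e * h * h).
      { unfold psi in Hc. replace (u + h - h) with u in Hc by ring.
        replace (c - (c - h)) with h in He by ring.
        replace (u + h - u) with h in Hc by ring.
        rewrite He in Hc. lra. }
      rewrite E.
      assert (Hb := rp_bound e ltac:(lra)).
      assert (Hse : 0 < sqrt e) by (apply sqrt_lt_R0; lra).
      assert (Hsu : sqrt e <= sqrt (u + h)) by (apply sqrt_le_1_alt; lra).
      assert (Hm : e * sqrt e <= (u + h) * sqrt (u + h)).
      { apply Rmult_le_compat; lra. }
      assert (Hb2 : -3 / (10 * e * sqrt e) <= -3 / (10 * (u + h) * sqrt (u + h))).
      { assert (0 < e * sqrt e) by nra.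
        replace (-3 / (10 * e * sqrt e)) with (-(3 / (10 * (e * sqrt e)))) by (field; lra).
        replace (-3 / (10 * (u + h) * sqrt (u + h))) with (-(3 / (10 * ((u + h) * sqrt (u + h))))) by (field; split; nra).
        apply Ropp_le_contravar. unfold Rdiv.
        apply Rmult_le_compat_l; [lra|]. apply Rinv_le_contravar; [nra| nra]. }
      replace (- (3 * h * h) / (10 * (u + h) * sqrt (u + h))) with ((-3 / (10 * (u + h) * sqrt (u + h))) * h * h) by (field; split; nra).
      apply Rmult_le_compat_r; [lra|]. apply Rmult_le_compat_r; [lra|]. lra.
Qed.

Lemma theta_bound u h : 0 < h -> h <= 7 -> 169 <= u - h ->
  1 - G (u - h) * G (u + h) / (G u) ^ 2 >= h * h / (8 * ((u + h) * sqrt (u + h))).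
Proof.
  intros Hh Hh7 Hu.
  pose proof (second_diff u h Hh Hu) as HQ.
  assert (Hs : 13 <= sqrt (u + h)).
  { replace 13 with (sqrt 169). apply sqrt_le_1_alt; lra.
    replace 169 with (13*13) by ring. apply sqrt_square; lra. }
  set (S3 := (u + h) * sqrt (u + h)) in *.
  assert (HS3 : 2197 <= S3) by (unfold S3; nra).
  set (t := 3 * h * h / (10 * S3)).
  assert (Ht0 : 0 <= t) by (unfold t; apply Rdiv_le_0_compat; nra).
  assert (Ht1 : t <= 7/5).
  { unfold t. apply Rmult_le_reg_r with (10 * S3); [lra|].
    unfold Rdiv. rewrite Rmult_assoc, Rinv_l by lra. nra. }
  assert (HQ' : ln (G (u + h)) + ln (G (u - h)) - 2 * ln (G u) <= - t).
  { eapply Rle_trans; [exact HQ|]. right. unfold t, S3. field. split; lra. }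
  pose proof (G_pos u ltac:(lra)) as Ga. pose proof (G_pos (u-h) ltac:(lra)) as Gb. pose proof (G_pos (u+h) ltac:(lra)) as Gc.
  assert (ET : G (u - h) * G (u + h) / (G u) ^ 2 = exp (ln (G (u + h)) + ln (G (u - h)) - 2 * ln (G u))).
  { replace (ln (G (u + h)) + ln (G (u - h)) - 2 * ln (G u)) with (ln (G (u + h)) + ln (G (u - h)) + - (ln (G u) + ln (G u))) by ring.
    rewrite exp_plus, exp_Ropp, !exp_plus, !exp_ln by lra. field. lra. }
  rewrite ET.
  assert (H1 : exp (ln (G (u + h)) + ln (G (u - h)) - 2 * ln (G u)) <= exp (-t)).
  { destruct HQ' as [Hlt|Heq]; [left; apply exp_increasing; auto| rewrite Heq; lra]. }
  assert (H2 : exp (- t) <= 1 / (1 + t)).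
  { rewrite exp_Ropp. pose proof (exp_ineq1_le t). pose proof (exp_pos t).
    unfold Rdiv. rewrite Rmult_1_l. apply Rinv_le_contravar; lra. }
  assert (H3 : 1 - 1 / (1 + t) >= h * h / (8 * S3)).
  { replace (1 - 1 / (1 + t)) with (t / (1 + t)) by (field; lra).
    assert (Htd : t * (10 * S3) = 3 * h * h) by (unfold t; field; lra).
    clearbody t. apply Rle_ge.
    apply Rmult_le_reg_r with (8 * S3 * (1 + t)). nra.
    replace (t / (1 + t) * (8 * S3 * (1 + t))) with (8 * S3 * t) by (field; lra).
    replace (h * h / (8 * S3) * (8 * S3 * (1 + t))) with (h * h * (1 + t)) by (field; lra).
    nra. }
  lra.
Qed.

Lemma bessel_G y : bessel_I2 y = (y/2)^2 * G ((y/2)^2).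
Proof.
  unfold bessel_I2, G, PSeries. rewrite <- Series_scal_l. apply Series_ext. intro m.
  unfold ca. rewrite pow_add, pow_mult. unfold Rdiv. ring.
Qed.

Lemma Mk_eq k t : 0 < 24 * t - (2 * INR k + 2) ->
  Mk k t = PI^3 * alphak k ^ 2 / 72 * G (alphak k * PI^2 * (24*t - (2*INR k+2)) / 144).
Proof.
  intro Ha.
  assert (Hal : 0 < alphak k).
  { unfold alphak. pose proof (pos_INR k). apply Rdiv_lt_0_compat; lra. }
  unfold Mk, xk. rewrite bessel_G.
  set (a := 24 * t - (2 * INR k + 2)) in *.
  assert (Hs : sqrt a * sqrt a = a) by (apply sqrt_sqrt; lra).
  assert (Hsa : sqrt (alphak k) * sqrt (alphak k) = alphak k) by (apply sqrt_sqrt; lra).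
  pose proof PI_RGT_0.
  assert (E : (sqrt (alphak k) * (PI * sqrt a / 6) / 2) ^ 2 = alphak k * PI ^ 2 * a / 144).
  { replace ((sqrt (alphak k) * (PI * sqrt a / 6) / 2) ^ 2) with
      ((sqrt (alphak k) * sqrt (alphak k)) * PI ^ 2 * (sqrt a * sqrt a) / 144) by field.
    rewrite Hs, Hsa. reflexivity. }
  rewrite E.
  replace ((PI * sqrt a / 6) ^ 2) with (PI^2 * (sqrt a * sqrt a) / 36) by field.
  rewrite Hs. field. split; lra.
Qed.

Theorem lemma4p3 (k n : nat) :
  (3 <= k)%nat ->
  xk k (INR n - 1) >= 26 / sqrt (alphak k) ->
  1 - ThetaM k (INR n) >= sqrt (alphak k) * PI ^ 4 / (36 * (xk k (INR n + 1)) ^ 3).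
Proof.
  intros _ Hx.
  pose proof (pos_INR k) as Hk0.
  set (al := alphak k) in *.
  assert (Hal : 0 < al) by (unfold al, alphak; apply Rdiv_lt_0_compat; lra).
  assert (Hal5 : al <= 5/2).
  { unfold al, alphak. apply Rmult_le_reg_r with (2 * INR k + 1); [lra|].
    unfold Rdiv. rewrite Rmult_assoc, Rinv_l by lra. lra. }
  pose proof PI_RGT_0 as HPI. pose proof PI_4 as HPI4.
  set (c0 := 2 * INR k + 2) in *.
  set (A := 24 * INR n - c0).
  set (sa := sqrt al).
  assert (Hsa : sa * sa = al) by (apply sqrt_sqrt; lra).
  assert (Hsa0 : 0 < sa) by (apply sqrt_lt_R0; lra).
  unfold xk in Hx. fold c0 in Hx. fold sa in Hx.
  replace (24 * (INR n - 1) - c0) with (A - 24) in Hx by (unfold A; ring).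
  assert (HA : 0 < A - 24).
  { destruct (Rlt_or_le 0 (A - 24)) as [H|H]; auto.
    rewrite sqrt_neg_0 in Hx by auto. idtac.
    assert (0 < 26 / sa) by (apply Rdiv_lt_0_compat; lra). lra. }
  set (h := al * PI ^ 2 / 6).
  set (u := al * PI ^ 2 * A / 144).
  assert (Eu : al * PI ^ 2 * (24 * INR n - c0) / 144 = u) by reflexivity.
  assert (Em : al * PI ^ 2 * (24 * (INR n - 1) - c0) / 144 = u - h) by (unfold u, h, A; field).
  assert (Ep : al * PI ^ 2 * (24 * (INR n + 1) - c0) / 144 = u + h) by (unfold u, h, A; field).
  unfold ThetaM.
  rewrite (Mk_eq k (INR n - 1)) by (fold c0; unfold A in HA; lra).
  rewrite (Mk_eq k (INR n + 1)) by (fold c0; unfold A in HA; lra).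
  rewrite (Mk_eq k (INR n)) by (fold c0; unfold A in HA; lra).
  fold al c0. rewrite Em, Ep, Eu.
  assert (Hu0 : 0 < u).
  { unfold u. assert (0 < al * PI ^ 2) by (apply Rmult_lt_0_compat; [lra| apply pow_lt; lra]). apply Rdiv_lt_0_compat; [|lra]. apply Rmult_lt_0_compat; lra. }
  pose proof (G_pos u ltac:(lra)) as HGu.
  assert (HP2 : 0 < PI ^ 2) by (apply pow_lt; lra).
  assert (HP3 : 0 < PI ^ 3) by (apply pow_lt; lra).
  assert (HP16 : PI ^ 2 <= 16) by (simpl; nra).
  assert (Hal2 : 0 < al ^ 2) by (apply pow_lt; lra).
  replace (PI ^ 3 * al ^ 2 / 72 * G (u - h) * (PI ^ 3 * al ^ 2 / 72 * G (u + h)) /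
     (PI ^ 3 * al ^ 2 / 72 * G u) ^ 2) with (G (u - h) * G (u + h) / G u ^ 2)
    by (field; repeat split; lra).
  assert (Hh : 0 < h) by (unfold h; apply Rdiv_lt_0_compat; [apply Rmult_lt_0_compat|]; lra).
  assert (Hh7 : h <= 7).
  { unfold h. apply Rmult_le_reg_r with 6; [lra|].
    unfold Rdiv. rewrite Rmult_assoc, Rinv_l by lra. nra. }
  assert (Hu169 : 169 <= u - h).
  { rewrite <- Em. replace (24 * (INR n - 1) - c0) with (A - 24) by (unfold A; ring).
    set (sm := sqrt (A - 24)) in *.
    assert (Hsm : sm * sm = A - 24) by (apply sqrt_sqrt; lra).
    assert (Hw : 26 <= sa * (PI * sm / 6)).
    { apply Rge_le in Hx. apply Rmult_le_compat_l with (r := sa) in Hx; [|lra].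
      replace (sa * (26 / sa)) with 26 in Hx by (field; lra). exact Hx. }
    replace (al * PI ^ 2 * (A - 24) / 144) with ((sa * (PI * sm / 6)) * (sa * (PI * sm / 6)) / 4)
      by (rewrite <- Hsm, <- Hsa; field).
    nra. }
  pose proof (theta_bound u h Hh Hh7 Hu169) as HT.
  set (ap := 24 * (INR n + 1) - c0).
  assert (Hap : 0 < ap) by (unfold ap; unfold A in HA; lra).
  set (sp := sqrt ap).
  assert (Hsp : sp * sp = ap) by (apply sqrt_sqrt; lra).
  assert (Hsp0 : 0 < sp) by (apply sqrt_lt_R0; lra).
  assert (Esq : sqrt (u + h) = sa * PI * sp / 12).
  { apply sqrt_lem_1.
    - lra.
    - apply Rdiv_le_0_compat; [|lra]. left. apply Rmult_lt_0_compat; [nra|lra].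
    - rewrite <- Ep. fold ap. rewrite <- Hsp, <- Hsa. field. }
  unfold xk. fold c0 ap sp.
  rewrite Esq in HT.
  replace (sa * PI ^ 4 / (36 * (PI * sp / 6) ^ 3)) with
    (h * h / (8 * ((u + h) * (sa * PI * sp / 12)))).
  - exact HT.
  - rewrite <- Ep. fold ap. unfold h. rewrite <- Hsp, <- Hsa. field. split; lra.
Qed.
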